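(* Given a Moore-Penrose dagger additive category $(\mathbb{X}, \dagger)$ and any object $X \in \mathbb{X}$, $\mathfrak{G}\left[ (\mathbb{X}, \dagger) \right]_X$ is a Markov category with conditionals. In particular, given a map $F= \left( \begin{bmatrix} f \\ g \end{bmatrix}, \begin{bmatrix} \alpha & \beta \\ \beta^\dagger & \delta \end{bmatrix}, \begin{bmatrix} s \\ t \end{bmatrix} \right): A \to B \otimes C$ in $\mathfrak{G}\left[ (\mathbb{X}, \dagger) \right]_X$, the map $F\vert_B: B \otimes A \to C$ defined as the triple: \begin{align*} F\vert_B = \left( \begin{bmatrix} \beta^\dagger \circ \alpha^\circ & g - \beta^\dagger \circ \alpha^\circ \circ f \end{bmatrix}, \delta - \beta^\dagger \circ \alpha^\circ \circ \beta, t - \beta^\dagger \circ \alpha^\circ \circ s \right) \end{align*} is a conditional of $F$.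
   Context: A dagger additive category $(\mathbb{X}, \dagger)$ is a dagger category enriched in abelian groups with additive dagger and finite biproducts satisfying $\pi_j^\dagger = \iota_j$; maps between biproducts are written as matrices and the dagger acts as conjugate transpose. A Moore-Penrose inverse of $f: A \to B$ is a map $f^\circ: B \to A$ with $f \circ f^\circ \circ f = f$, $f^\circ \circ f \circ f^\circ = f^\circ$, $(f \circ f^\circ)^\dagger = f \circ f^\circ$, $(f^\circ \circ f)^\dagger = f^\circ \circ f$; $(\mathbb{X},\dagger)$ is Moore-Penrose if every map has one. A map $p$ is $\dagger$-positive if $p = \phi^\dagger \circ \phi$ for some $\phi$. For an object $X$, the Gauss construction $\mathfrak{G}\left[ (\mathbb{X}, \dagger) \right]_X$ is the Markov category with the objects of $\mathbb{X}$, maps $A \to B$ the triples $(f,p,x)$ with $f: A \to B$, $p: B \to B$ $\dagger$-positive, $x: X \to B$; identities $\mathsf{Id}_A = (\mathsf{id}_A,0,0)$; composition $(g,q,y) \circ (f,p,x) = (g \circ f, q + g \circ p \circ g^\dagger, y + g \circ x)$; $A \otimes B = A \oplus B$, $(f,p,x) \otimes (g,q,y) = \left(f \oplus g, p \oplus q, \begin{bmatrix} x \\ y \end{bmatrix}\right)$, unit the zero object $\mathsf{0}$; copy $\mathsf{copy}_A = \left(\begin{bmatrix} \mathsf{id}_A \\ \mathsf{id}_A \end{bmatrix}, 0, 0\right)$, delete $\mathsf{del}_A = (0,0,0): A \to \mathsf{0}$. In $F$, $f: A \to B$, $g: A \to C$, $\alpha: B \to B$, $\beta: C \to B$, $\delta: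 C \to C$, $s: X \to B$, $t: X \to C$. A map $G: B \otimes A \to C$ is a conditional of $F: A \to B \otimes C$ if $(\mathsf{Id}_B \otimes G) \circ (\mathsf{copy}_B \otimes \mathsf{Id}_A) \circ (\mathsf{Id}_B \otimes \mathsf{del}_C \otimes \mathsf{Id}_A) \circ (F \otimes \mathsf{Id}_A) \circ \mathsf{copy}_A = F$; a Markov category with conditionals is one in which every map $A \to B \otimes C$ has a conditional. *)

(* Defs.v *)
From mathcomp Require Import all_boot all_algebra.
Set Implicit Arguments. Unset Strict Implicit. Unset Printing Implicit Defensive.
Import GRing.Theory.
Local Open Scope ring_scope.

(** A dagger additive category: a dagger category enriched in abelian groups
    (hom-sets are zmodTypes, composition bilinear), with an additive dagger,
    a zero object and binary biproducts satisfying pi_j^dagger = iota_j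
    (binary biproducts + zero object = all finite biproducts). *)
Record DagAddCat := DagAddCat_ {
  Ob :> Type;
  Hom : Ob -> Ob -> zmodType;
  comp : forall A B C : Ob, Hom B C -> Hom A B -> Hom A C;
  idm : forall A : Ob, Hom A A;
  dag : forall A B : Ob, Hom A B -> Hom B A;
  zeroOb : Ob;
  bip : Ob -> Ob -> Ob;
  pi1 : forall A B : Ob, Hom (bip A B) A;
  pi2 : forall A B : Ob, Hom (bip A B) B;
  iota1 : forall A B : Ob, Hom A (bip A B);
  iota2 : forall A B : Ob, Hom B (bip A B);
  comp_assoc : forall (A B C D : Ob) (h : Hom C D) (g : Hom B C) (f : Hom A B),
      comp h (comp g f) = comp (comp h g) f;
  comp_idl : forall (A B : Ob) (f : Hom A B), comp (idm B) f = f;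
  comp_idr : forall (A B : Ob) (f : Hom A B), comp f (idm A) = f;
  comp_addl : forall (A B C : Ob) (g1 g2 : Hom B C) (f : Hom A B),
      comp (g1 + g2) f = comp g1 f + comp g2 f;
  comp_addr : forall (A B C : Ob) (g : Hom B C) (f1 f2 : Hom A B),
      comp g (f1 + f2) = comp g f1 + comp g f2;
  dag_invol : forall (A B : Ob) (f : Hom A B), dag (dag f) = f;
  dag_comp : forall (A B C : Ob) (g : Hom B C) (f : Hom A B),
      dag (comp g f) = comp (dag f) (dag g);
  dag_id : forall A : Ob, dag (idm A) = idm A;
  dag_add : forall (A B : Ob) (f g : Hom A B), dag (f + g) = dag f + dag g;
  zero_to : forall (A : Ob) (f : Hom A zeroOb), f = 0;
  zero_from : forall (A : Ob) (f : Hom zeroOb A), f = 0;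
  bip_11 : forall A B : Ob, comp (pi1 A B) (iota1 A B) = idm A;
  bip_22 : forall A B : Ob, comp (pi2 A B) (iota2 A B) = idm B;
  bip_12 : forall A B : Ob, comp (pi1 A B) (iota2 A B) = 0;
  bip_21 : forall A B : Ob, comp (pi2 A B) (iota1 A B) = 0;
  bip_sum : forall A B : Ob,
      comp (iota1 A B) (pi1 A B) + comp (iota2 A B) (pi2 A B) = idm (bip A B);
  dag_pi1 : forall A B : Ob, dag (pi1 A B) = iota1 A B;
  dag_pi2 : forall A B : Ob, dag (pi2 A B) = iota2 A B
}.

Arguments Hom {_}.
Arguments comp {_ A B C}.
Arguments idm {_}.
Arguments dag {_ A B}.
Arguments zeroOb {_}.
Arguments bip {_}.
Arguments pi1 {_}.
Arguments pi2 {_}.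
Arguments iota1 {_}.
Arguments iota2 {_}.

Section Gauss.
Variable XX : DagAddCat.

Local Notation "g \oo f" := (comp g f) (at level 40, left associativity).

Definition isMPinv (A B : XX) (f : Hom A B) (fo : Hom B A) : Prop :=
  [/\ f \oo fo \oo f = f, fo \oo f \oo fo = fo,
      dag (f \oo fo) = f \oo fo & dag (fo \oo f) = fo \oo f].

Definition isMoorePenrose : Prop :=
  forall (A B : XX) (f : Hom A B), exists fo : Hom B A, isMPinv f fo.

Definition dag_positive (B : XX) (p : Hom B B) : Prop :=
  exists (D : XX) (phi : Hom B D), p = dag phi \oo phi.

Definition col2 (Y B C : XX) (x : Hom Y B) (y : Hom Y C) : Hom Y (bip B C) :=
  iota1 B C \oo x + iota2 B C \oo y.
Definition row2 (B A C : XX) (h : Hom B C) (k : Hom A C) : Hom (bip B A) C :=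
  h \oo pi1 B A + k \oo pi2 B A.
Definition dsum (A A' B B' : XX) (f : Hom A B) (g : Hom A' B') :
    Hom (bip A A') (bip B B') :=
  iota1 B B' \oo f \oo pi1 A A' + iota2 B B' \oo g \oo pi2 A A'.
Definition mat22 (B C : XX) (a : Hom B B) (b : Hom C B) (c : Hom B C) (d : Hom C C) :
    Hom (bip B C) (bip B C) :=
  iota1 B C \oo a \oo pi1 B C + iota1 B C \oo b \oo pi2 B C
  + iota2 B C \oo c \oo pi1 B C + iota2 B C \oo d \oo pi2 B C.

Variable X : XX.

(** Maps of the Gauss construction G[(XX,dag)]_X : triples (f, p, x);
    the positivity requirement on p is the predicate [gpos]. *)
Record gmap (A B : XX) := GMap { gf : Hom A B; gp : Hom B B; gx : Hom X B }.

Definition gpos (A B : XX) (F : gmap A B) : Prop := dag_positive (gp F).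

Definition gId (A : XX) : gmap A A := GMap (idm A) 0 0.

Definition gcomp (A B C : XX) (G : gmap B C) (F : gmap A B) : gmap A C :=
  GMap (gf G \oo gf F) (gp G + gf G \oo gp F \oo dag (gf G)) (gx G + gf G \oo gx F).

Definition gtensor (A A' B B' : XX) (F : gmap A B) (G : gmap A' B') :
    gmap (bip A A') (bip B B') :=
  GMap (dsum (gf F) (gf G)) (dsum (gp F) (gp G)) (col2 (gx F) (gx G)).

Definition gcopy (A : XX) : gmap A (bip A A) := GMap (col2 (idm A) (idm A)) 0 0.
Definition gdel (A : XX) : gmap A zeroOb := GMap 0 0 0.

(** Structural isomorphisms (deterministic maps) of the monoidal structure
    that are suppressed in the informal string-diagram equation. *)
Definition gdet (A B : XX) (f : Hom A B) : gmap A B := GMap f 0 0.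
Definition grunit (B : XX) : gmap (bip B zeroOb) B := gdet (pi1 B zeroOb).
Definition gassoc (B B' A : XX) : gmap (bip (bip B B') A) (bip B (bip B' A)) :=
  gdet (iota1 B (bip B' A) \oo pi1 B B' \oo pi1 (bip B B') A
        + iota2 B (bip B' A) \oo (iota1 B' A \oo pi2 B B' \oo pi1 (bip B B') A
                                 + iota2 B' A \oo pi2 (bip B B') A)).

Definition is_conditional (A B C : XX) (F : gmap A (bip B C)) (G : gmap (bip B A) C)
    : Prop :=
  gpos G /\
  gcomp (gtensor (gId B) G)
   (gcomp (gassoc B B A)
    (gcomp (gtensor (gcopy B) (gId A))
     (gcomp (gtensor (grunit B) (gId A))
      (gcomp (gtensor (gtensor (gId B) (gdel C)) (gId A))
       (gcomp (gtensor F (gId A)) (gcopy A)))))) = F.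

Definition has_conditionals : Prop :=
  forall (A B C : XX) (F : gmap A (bip B C)), gpos F ->
    exists G : gmap (bip B A) C, is_conditional F G.

Definition Fblock (A B C : XX) (f : Hom A B) (g : Hom A C) (alpha : Hom B B)
  (beta : Hom C B) (delta : Hom C C) (s : Hom X B) (t : Hom X C) : gmap A (bip B C) :=
  GMap (col2 f g) (mat22 alpha beta (dag beta) delta) (col2 s t).

Definition Fcond (A B C : XX) (f : Hom A B) (g : Hom A C) (alpha alpha_o : Hom B B)
  (beta : Hom C B) (delta : Hom C C) (s : Hom X B) (t : Hom X C) : gmap (bip B A) C :=
  GMap (row2 (dag beta \oo alpha_o) (g - dag beta \oo alpha_o \oo f))
       (delta - dag beta \oo alpha_o \oo beta)
       (t - dag beta \oo alpha_o \oo s).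

End Gauss.

Arguments gmap {XX} X A B.

(* Main.v *)
Require Import Defs.
From mathcomp Require Import ssreflect ssrfun ssrbool ssralg.
Set Implicit Arguments. Unset Strict Implicit. Unset Printing Implicit Defensive.
Import GRing.Theory.
Local Open Scope ring_scope.

Section Lemmas.
Variable XX : DagAddCat.
Local Notation "g • f" := (Defs.comp g f) (at level 40, left associativity).
Implicit Types A B C D E : XX.

Lemma comp0l A B C (f : Hom A B) : (0 : Hom B C) • f = 0.
Proof.
have h := Defs.comp_addl (0 : Hom B C) 0 f; rewrite addr0 in h.
by apply: (addrI (0 • f)); rewrite -h addr0.
Qed.
Lemma comp0r A B C (g : Hom B C) : g • (0 : Hom A B) = 0.
Proof.
have h := Defs.comp_addr g (0 : Hom A B) 0; rewrite addr0 in h.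
by apply: (addrI (g • 0)); rewrite -h addr0.
Qed.
Lemma compNl A B C (g : Hom B C) (f : Hom A B) : (- g) • f = - (g • f).
Proof. by apply: (addrI (g • f)); rewrite -Defs.comp_addl !subrr comp0l. Qed.
Lemma compNr A B C (g : Hom B C) (f : Hom A B) : g • (- f) = - (g • f).
Proof. by apply: (addrI (g • f)); rewrite -Defs.comp_addr !subrr comp0r. Qed.
Lemma dag0 A B : dag (0 : Hom A B) = 0.
Proof.
have h := dag_add (0 : Hom A B) 0; rewrite addr0 in h.
by apply: (addrI (dag (0 : Hom A B))); rewrite -h addr0.
Qed.
Lemma dagN A B (f : Hom A B) : dag (- f) = - dag f.
Proof. by apply: (addrI (dag f)); rewrite -dag_add !subrr dag0. Qed.
Lemma dag_iota1 A B : dag (iota1 A B) = pi1 A B.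
Proof. by rewrite -dag_pi1 dag_invol. Qed.
Lemma dag_iota2 A B : dag (iota2 A B) = pi2 A B.
Proof. by rewrite -dag_pi2 dag_invol. Qed.

Lemma p1i1_r A B Y (r : Hom Y A) : pi1 A B • (iota1 A B • r) = r.
Proof. by rewrite Defs.comp_assoc bip_11 Defs.comp_idl. Qed.
Lemma p2i2_r A B Y (r : Hom Y B) : pi2 A B • (iota2 A B • r) = r.
Proof. by rewrite Defs.comp_assoc bip_22 Defs.comp_idl. Qed.
Lemma p1i2_r A B Y (r : Hom Y B) : pi1 A B • (iota2 A B • r) = 0.
Proof. by rewrite Defs.comp_assoc bip_12 comp0l. Qed.
Lemma p2i1_r A B Y (r : Hom Y A) : pi2 A B • (iota1 A B • r) = 0.
Proof. by rewrite Defs.comp_assoc bip_21 comp0l. Qed.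

Lemma ext_to A B Y (h k : Hom Y (bip A B)) :
  pi1 A B • h = pi1 A B • k -> pi2 A B • h = pi2 A B • k -> h = k.
Proof.
move=> e1 e2; rewrite -(comp_idl h) -(comp_idl k) -bip_sum !Defs.comp_addl.
by rewrite -!Defs.comp_assoc e1 e2.
Qed.
Lemma ext_from A B Y (h k : Hom (bip A B) Y) :
  h • iota1 A B = k • iota1 A B -> h • iota2 A B = k • iota2 A B -> h = k.
Proof.
move=> e1 e2; rewrite -(comp_idr h) -(comp_idr k) -bip_sum !Defs.comp_addr.
by rewrite !Defs.comp_assoc e1 e2.
Qed.
Lemma ext_mat A B A' B' (h k : Hom (bip A B) (bip A' B')) :
  pi1 A' B' • (h • iota1 A B) = pi1 A' B' • (k • iota1 A B) ->
  pi1 A' B' • (h • iota2 A B) = pi1 A' B' • (k • iota2 A B) ->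
  pi2 A' B' • (h • iota1 A B) = pi2 A' B' • (k • iota1 A B) ->
  pi2 A' B' • (h • iota2 A B) = pi2 A' B' • (k • iota2 A B) -> h = k.
Proof.
move=> e11 e12 e21 e22; apply: ext_from; apply: ext_to; done.
Qed.

Lemma p1dsum_r A A' B B' Y (f : Hom A B) (g : Hom A' B') (r : Hom Y (bip A A')) :
  pi1 B B' • (dsum f g • r) = f • (pi1 A A' • r).
Proof.
rewrite /dsum !Defs.comp_addl !Defs.comp_addr -!Defs.comp_assoc p1i1_r p1i2_r addr0.
by rewrite Defs.comp_assoc.
Qed.
Lemma p1dsum A A' B B' (f : Hom A B) (g : Hom A' B') :
  pi1 B B' • dsum f g = f • pi1 A A'.
Proof. by rewrite -[dsum f g]Defs.comp_idr p1dsum_r Defs.comp_idr. Qed.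
Lemma p2dsum_r A A' B B' Y (f : Hom A B) (g : Hom A' B') (r : Hom Y (bip A A')) :
  pi2 B B' • (dsum f g • r) = g • (pi2 A A' • r).
Proof.
rewrite /dsum !Defs.comp_addl !Defs.comp_addr -!Defs.comp_assoc p2i2_r p2i1_r add0r.
by rewrite Defs.comp_assoc.
Qed.
Lemma p2dsum A A' B B' (f : Hom A B) (g : Hom A' B') :
  pi2 B B' • dsum f g = g • pi2 A A'.
Proof. by rewrite -[dsum f g]Defs.comp_idr p2dsum_r Defs.comp_idr. Qed.
Lemma p1col2_r A B Y Z (x : Hom Y A) (y : Hom Y B) (r : Hom Z Y) :
  pi1 A B • (col2 x y • r) = x • r.
Proof. by rewrite /col2 !Defs.comp_addl !Defs.comp_addr -!Defs.comp_assoc p1i1_r p1i2_r addr0. Qed.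
Lemma p2col2_r A B Y Z (x : Hom Y A) (y : Hom Y B) (r : Hom Z Y) :
  pi2 A B • (col2 x y • r) = y • r.
Proof. by rewrite /col2 !Defs.comp_addl !Defs.comp_addr -!Defs.comp_assoc p2i2_r p2i1_r add0r. Qed.
Lemma p1col2 A B Y (x : Hom Y A) (y : Hom Y B) : pi1 A B • col2 x y = x.
Proof. by rewrite -[col2 x y]Defs.comp_idr p1col2_r Defs.comp_idr. Qed.
Lemma p2col2 A B Y (x : Hom Y A) (y : Hom Y B) : pi2 A B • col2 x y = y.
Proof. by rewrite -[col2 x y]Defs.comp_idr p2col2_r Defs.comp_idr. Qed.
Lemma dag_dsum A A' B B' (f : Hom A B) (g : Hom A' B') :
  dag (dsum f g) = dsum (dag f) (dag g).
Proof.
by rewrite /dsum dag_add !dag_comp dag_pi1 dag_pi2 !dag_iota1 !dag_iota2 !Defs.comp_assoc.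
Qed.
Lemma dag_col2 A B Y (x : Hom Y A) (y : Hom Y B) :
  dag (col2 x y) = dag x • pi1 A B + dag y • pi2 A B.
Proof. by rewrite /col2 dag_add !dag_comp !dag_iota1 !dag_iota2. Qed.
Lemma dag_row2 A B Y (x : Hom A Y) (y : Hom B Y) :
  dag (row2 x y) = col2 (dag x) (dag y).
Proof. by rewrite /row2 /col2 dag_add !dag_comp dag_pi1 dag_pi2. Qed.
Lemma dsum00 A A' B B' : dsum (0 : Hom A B) (0 : Hom A' B') = 0.
Proof. by rewrite /dsum !comp0r !comp0l addr0. Qed.
Lemma col200 A B Y : col2 (0 : Hom Y A) (0 : Hom Y B) = 0.
Proof. by rewrite /col2 !comp0r addr0. Qed.

Definition amat (B B' A : XX) : Hom (bip (bip B B') A) (bip B (bip B' A)) :=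
  iota1 B (bip B' A) • pi1 B B' • pi1 (bip B B') A
        + iota2 B (bip B' A) • (iota1 B' A • pi2 B B' • pi1 (bip B B') A
                                 + iota2 B' A • pi2 (bip B B') A).

Variable X : XX.
Lemma gassoc_det B B' A : gassoc X B B' A = gdet X (amat B B' A).
Proof. by []. Qed.
Lemma gId_det A : gId X A = gdet X (idm A). Proof. by []. Qed.
Lemma gcopy_det A : gcopy X A = gdet X (col2 (idm A) (idm A)). Proof. by []. Qed.
Lemma gdel_det A : gdel X A = gdet X (0 : Hom A zeroOb). Proof. by []. Qed.
Lemma grunit_det B : grunit X B = gdet X (pi1 B zeroOb). Proof. by []. Qed.
Lemma gcomp_detl A B C (g : Hom B C) (H : gmap X A B) :
  gcomp (gdet X g) H = GMap (g • gf H) (g • gp H • dag g) (g • gx H).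
Proof. by rewrite /gcomp /= !add0r. Qed.
Lemma gcomp_detr A B C (f : Hom A B) (H : gmap X B C) :
  gcomp H (gdet X f) = GMap (gf H • f) (gp H) (gx H).
Proof. by rewrite /gcomp /= !comp0r !comp0l !addr0. Qed.
Lemma gtensor_det A A' B B' (f : Hom A B) (g : Hom A' B') :
  gtensor (gdet X f) (gdet X g) = gdet X (dsum f g).
Proof. by rewrite /gtensor /gdet /= dsum00 col200. Qed.


Lemma dsum_col2 A A' B B' Y (f : Hom A B) (g : Hom A' B') (x : Hom Y A) (y : Hom Y A') :
  dsum f g • col2 x y = col2 (f • x) (g • y).
Proof. by apply: ext_to; rewrite ?p1dsum_r ?p2dsum_r ?p1col2 ?p2col2. Qed.
Ltac simp := repeat progress rewrite ?Defs.comp_addl ?Defs.comp_addr -?Defs.comp_assoc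
  ?p1i1_r ?p1i2_r ?p2i1_r ?p2i2_r ?bip_11 ?bip_12 ?bip_21 ?bip_22 ?comp0l ?comp0r
  ?Defs.comp_idl ?Defs.comp_idr ?addr0 ?add0r ?p1col2 ?p2col2 ?p1col2_r ?p2col2_r.
Lemma amat_col2 B B' A Y (a : Hom Y B) (b : Hom Y B') (c : Hom Y A) :
  amat B B' A • col2 (col2 a b) c = col2 a (col2 b c).
Proof.
rewrite /amat; apply: ext_to; simp => //.
Qed.
Lemma col2_comp A B Y Z (x : Hom Y A) (y : Hom Y B) (r : Hom Z Y) :
  col2 x y • r = col2 (x • r) (y • r).
Proof. by rewrite /col2 Defs.comp_addl -!Defs.comp_assoc. Qed.
Lemma col2_add A B Y (a c : Hom Y A) (b d : Hom Y B) :
  col2 a b + col2 c d = col2 (a + c) (b + d).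
Proof. by rewrite /col2 !Defs.comp_addr addrACA. Qed.
Lemma row2_col2 A A' Y Z (h : Hom A Z) (k : Hom A' Z) (x : Hom Y A) (y : Hom Y A') :
  row2 h k • col2 x y = h • x + k • y.
Proof. by rewrite /row2 Defs.comp_addl -!Defs.comp_assoc p1col2 p2col2. Qed.

Lemma conj2 A B C (a : Hom B C) (b : Hom A B) (m : Hom A A) :
  a • (b • m • dag b) • dag a = (a • b) • m • dag (a • b).
Proof. by rewrite dag_comp !Defs.comp_assoc. Qed.

Lemma id_col3 B C A :
  idm (bip (bip B C) A) =
  col2 (col2 (pi1 B C • pi1 (bip B C) A) (pi2 B C • pi1 (bip B C) A)) (pi2 (bip B C) A).
Proof.
apply: ext_to; rewrite ?p1col2 ?p2col2 ?Defs.comp_idr //.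
by apply: ext_to; rewrite ?p1col2 ?p2col2 ?Defs.comp_idr.
Qed.

Lemma Dchain A B C D (h : Hom B D) (k : Hom A D) :
  dsum (idm B) (row2 h k) • amat B B A • dsum (col2 (idm B) (idm B)) (idm A)
  • dsum (pi1 B zeroOb) (idm A) • dsum (dsum (idm B) (0 : Hom C zeroOb)) (idm A)
  = col2 (pi1 B C • pi1 (bip B C) A) (h • (pi1 B C • pi1 (bip B C) A) + k • pi2 (bip B C) A).
Proof.
rewrite -[LHS]Defs.comp_idr id_col3 -!Defs.comp_assoc.
repeat progress rewrite ?dsum_col2 ?amat_col2 ?col2_comp ?Defs.comp_idl ?Defs.comp_idr ?p1col2 ?comp0l ?comp0r ?col200 ?row2_col2.
by rewrite -Defs.comp_assoc row2_col2.
Qed.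

Ltac simp2 := repeat progress rewrite ?Defs.comp_addl ?Defs.comp_addr -?Defs.comp_assoc
  ?dag_add ?dag_comp ?dagN ?dag0 ?dag_pi1 ?dag_pi2 ?dag_iota1 ?dag_iota2 ?dag_invol ?dag_id
  ?p1i1_r ?p2i2_r ?p1i2_r ?p2i1_r ?bip_11 ?bip_12 ?bip_21 ?bip_22 ?comp0l ?comp0r ?compNl ?compNr
  ?Defs.comp_idl ?Defs.comp_idr ?addr0 ?add0r ?oppr0 ?p1col2 ?p2col2 ?p1col2_r ?p2col2_r
  ?p1dsum_r ?p2dsum_r ?p1dsum ?p2dsum.
Ltac push := rewrite ?Defs.comp_addl ?Defs.comp_addr ?comp0l ?comp0r ?compNl ?compNr
   ?Defs.comp_idl ?Defs.comp_idr -?Defs.comp_assoc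
   ?p1i1_r ?p2i2_r ?p1i2_r ?p2i1_r ?bip_11 ?bip_22 ?bip_12 ?bip_21
   ?p1dsum_r ?p2dsum_r ?p1dsum ?p2dsum ?p1col2_r ?p2col2_r ?p1col2 ?p2col2
   ?addr0 ?add0r ?oppr0.


Lemma dagsq0 (MP : isMoorePenrose XX) A B (x : Hom A B) : dag x • x = 0 -> x = 0.
Proof.
move=> h; have [xo [e1 _ e3 _]] := MP _ _ x.
by rewrite -e1 -e3 dag_comp -Defs.comp_assoc h comp0r.
Qed.

Lemma mp_key (MP : isMoorePenrose XX) B D (a : Hom B D) (al ao : Hom B B) :
  isMPinv al ao -> al = dag a • a -> a • (ao • al) = a.
Proof.
move=> [m1 m2 m3 m4] ha.
have dal : dag al = al by rewrite ha dag_comp dag_invol.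
have Hr : forall Y (r : Hom Y B), dag a • (a • r) = al • r.
  by move=> Y r; rewrite ha Defs.comp_assoc.
have m1r : forall Y (r : Hom Y B), al • (ao • (al • r)) = al • r.
  by move=> Y r; rewrite !Defs.comp_assoc m1.
have m1' : al • (ao • al) = al by rewrite Defs.comp_assoc m1.
have m5 : al • (dag ao • al) = al.
  by have := congr1 dag m1; rewrite !dag_comp dal.
have m5r : forall Y (r : Hom Y B), al • (dag ao • (al • r)) = al • r.
  by move=> Y r; rewrite !Defs.comp_assoc -(Defs.comp_assoc al) m5.
apply: subr0_eq; apply: (dagsq0 MP).
simp2. rewrite ?Hr ?dal -?ha ?m5r ?m1' ?m5.
by rewrite !subrr ?subr0 ?oppr0 ?addr0.
Qed.


Lemma cond_facts (MP : isMoorePenrose XX) B C D (alpha ao : Hom B B) (beta : Hom C B)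
  (delta : Hom C C) (phi : Hom (bip B C) D) :
  isMPinv alpha ao -> mat22 alpha beta (dag beta) delta = dag phi • phi ->
  [/\ alpha • (dag ao • beta) = beta, dag beta • (ao • alpha) = dag beta &
      exists (D' : XX) (psi : Hom C D'), delta - dag beta • ao • beta = dag psi • psi].
Proof.
move=> mp E.
have e11 : pi1 B C • (mat22 alpha beta (dag beta) delta • iota1 B C) = alpha.
  by rewrite /mat22; simp2.
have e12 : pi1 B C • (mat22 alpha beta (dag beta) delta • iota2 B C) = beta.
  by rewrite /mat22; simp2.
have e22 : pi2 B C • (mat22 alpha beta (dag beta) delta • iota2 B C) = delta.
  by rewrite /mat22; simp2.
rewrite E in e11 e12 e22.
set a := phi • iota1 B C; set b := phi • iota2 B C.
have ea : alpha = dag a • a by rewrite -e11 /a dag_comp dag_iota1 !Defs.comp_assoc.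
have eb : beta = dag a • b by rewrite -e12 /a /b dag_comp dag_iota1 !Defs.comp_assoc.
have ed : delta = dag b • b by rewrite -e22 /b dag_comp dag_iota2 !Defs.comp_assoc.
clearbody a b.
have L1 := mp_key MP mp ea.
have dal : dag alpha = alpha by rewrite ea dag_comp dag_invol.
have h : alpha • dag ao • dag a = dag a by have := congr1 dag L1; rewrite !dag_comp dal.
have Hb1 : alpha • (dag ao • beta) = beta by rewrite eb !Defs.comp_assoc h.
have Hb2 : dag beta • (ao • alpha) = dag beta.
  by rewrite eb dag_comp dag_invol -Defs.comp_assoc L1.
case: mp => m1 m2 m3 m4.
have H3 : alpha • (ao • beta) = beta.
  by rewrite -[in LHS]Hb1 !Defs.comp_assoc m1 -Defs.comp_assoc Hb1.
have E2 : dag beta • (dag ao • beta) = dag beta • (ao • beta).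
  by rewrite -[in LHS]Hb2 -!Defs.comp_assoc Hb1.
have Ha : forall Y (r : Hom Y B), dag a • (a • r) = alpha • r.
  by move=> Y r; rewrite ea Defs.comp_assoc.
have Hb : forall Y (r : Hom Y B), dag b • (a • r) = dag beta • r.
  by move=> Y r; rewrite eb dag_comp dag_invol Defs.comp_assoc.
split => //; exists D, (b - a • (ao • beta)).
simp2. rewrite ?Ha ?Hb -?ed -?eb ?H3 ?E2.
by rewrite subrr subr0.
Qed.
Lemma main_eq A B C (f : Hom A B) (g : Hom A C) (alpha ao : Hom B B)
  (beta : Hom C B) (delta : Hom C C) (s : Hom X B) (t : Hom X C) :
  alpha • (dag ao • beta) = beta -> dag beta • (ao • alpha) = dag beta ->
  gcomp (gtensor (gId X B) (Fcond f g alpha ao beta delta s t))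
   (gcomp (gassoc X B B A)
    (gcomp (gtensor (gcopy X B) (gId X A))
     (gcomp (gtensor (grunit X B) (gId X A))
      (gcomp (gtensor (gtensor (gId X B) (gdel X C)) (gId X A))
       (gcomp (gtensor (Fblock f g alpha beta delta s t) (gId X A)) (gcopy X A)))))) =
  Fblock f g alpha beta delta s t.
Proof.
move=> Hb1 Hb2.
rewrite gassoc_det grunit_det gdel_det gcopy_det !gId_det !gtensor_det.
rewrite gcomp_detr !gcomp_detl /gcomp /gtensor /Fblock /Fcond /=.
congr GMap.
- repeat progress rewrite ?dsum_col2 ?amat_col2 ?row2_col2 ?col2_comp ?Defs.comp_idl ?Defs.comp_idr ?p1col2 ?comp0l ?col200.
  by rewrite -Defs.comp_assoc row2_col2 Defs.comp_idr (addrC (dag beta • ao • f)) subrK.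
- rewrite !conj2 Dchain.
  apply: ext_mat; rewrite dag_col2 /mat22; simp2.
  + by [].
  + exact: Hb1.
  + exact: Hb2.
  + by rewrite Hb1 subrK.
- repeat progress rewrite ?dsum_col2 ?amat_col2 ?col2_comp ?Defs.comp_idl ?Defs.comp_idr ?p1col2 ?comp0l ?comp0r ?col200.
  by rewrite row2_col2 comp0r addr0 col2_add add0r subrK.
Qed.

Lemma part2 (MP : isMoorePenrose XX) A B C (f : Hom A B) (g : Hom A C) (alpha ao : Hom B B)
  (beta : Hom C B) (delta : Hom C C) (s : Hom X B) (t : Hom X C) :
  isMPinv alpha ao -> gpos (Fblock f g alpha beta delta s t) ->
  is_conditional (Fblock f g alpha beta delta s t) (Fcond f g alpha ao beta delta s t).
Proof.
move=> mp [D [phi E]].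
have [Hb1 Hb2 Hpos] := cond_facts MP mp E.
split; first exact: Hpos.
exact: main_eq.
Qed.

Lemma col2_eta A B Y (h : Hom Y (bip A B)) : col2 (pi1 A B • h) (pi2 A B • h) = h.
Proof. by apply: ext_to; rewrite ?p1col2 ?p2col2. Qed.

Lemma mat22_eta B C (p : Hom (bip B C) (bip B C)) : dag p = p ->
  mat22 (pi1 B C • (p • iota1 B C)) (pi1 B C • (p • iota2 B C))
        (dag (pi1 B C • (p • iota2 B C))) (pi2 B C • (p • iota2 B C)) = p.
Proof.
move=> dp; rewrite !dag_comp dp dag_pi1 dag_iota2.
apply: ext_mat; rewrite /mat22; simp2 => //.
Qed.

Lemma part1 (MP : isMoorePenrose XX) : has_conditionals X.
Proof.
move=> A B C [h p x] HF.
have dp : dag p = p.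
  by case: HF => D [phi /= ->]; rewrite dag_comp dag_invol.
have [ao mp] := MP _ _ (pi1 B C • (p • iota1 B C)).
have eF : GMap h p x = Fblock (pi1 B C • h) (pi2 B C • h) (pi1 B C • (p • iota1 B C))
   (pi1 B C • (p • iota2 B C)) (pi2 B C • (p • iota2 B C)) (pi1 B C • x) (pi2 B C • x).
  by rewrite /Fblock !col2_eta mat22_eta.
rewrite eF in HF *; eexists; exact: (part2 MP mp HF).
Qed.
End Lemmas.

Theorem mainTheorem11 (XX : DagAddCat) (X : XX) :
  isMoorePenrose XX ->
  has_conditionals X /\
  (forall (A B C : XX) (f : Hom A B) (g : Hom A C) (alpha alpha_o : Hom B B)
          (beta : Hom C B) (delta : Hom C C) (s : Hom X B) (t : Hom X C),
     isMPinv alpha alpha_o ->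
     gpos (Fblock f g alpha beta delta s t) ->
     is_conditional (Fblock f g alpha beta delta s t)
                    (Fcond f g alpha alpha_o beta delta s t)).
Proof.
move=> MP; split; first exact: part1.
by move=> A B C f g alpha ao beta delta s t; apply: part2.
Qed.
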